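(* Assume $\overline u>0$ and that $\Theta$ contains at least two points. For $x,y\in\mathbb{Z}^d$ define $\alpha^{x,y}(k)=\frac12\bigl(e^{-c|k-x|_1}+e^{-c|k-y|_1}\bigr)$ with $c=\frac1n\ln\bigl(1+\frac{\overline u}{2\|u\|_{\ell^1}}\bigr)$, $n=\max_{i,j\in\Theta}|i-j|_1$, and $W^{x,y}(k)=\sum_{j\in\mathbb{Z}^d}\alpha^{x,y}(j)u(k-j)$. Then for all $x,y,k\in\mathbb{Z}^d$, \[ W^{x,y}(k)\ge\alpha^{x,y}(k)\frac{\overline u}{2}>0, \] and in particular $W^{x,y}(k)\ge\overline u/4$ for $k\in\{x,y\}$.
   Context: $d\ge1$; $|x|_1=\sum_i|x_i|$. $u:\mathbb{Z}^d\to\mathbb{R}$ has finite nonempty support $\Theta$ with $0\in\Theta$; $\overline u=\sum_ku(k)$, $\|u\|_{\ell^1}=\sum_k|u(k)|$. *)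

(* Defs.v *)
From HB Require Import structures.
From mathcomp Require Import all_boot all_order all_algebra.
From mathcomp Require Import finmap.
From mathcomp Require Import all_classical all_reals all_analysis.
Set Implicit Arguments. Unset Strict Implicit. Unset Printing Implicit Defensive.
Import Order.TTheory GRing.Theory Num.Theory.
Local Open Scope ring_scope.
Local Open Scope fset_scope.

Definition l1 (d : nat) (x : 'rV[int]_d) : int := \sum_(i < d) `|x ord0 i|.

Definition ubar (R : realType) (d : nat) (Theta : {fset 'rV[int]_d})
  (u : 'rV[int]_d -> R) : R := \sum_(k <- Theta) u k.
Definition unorm (R : realType) (d : nat) (Theta : {fset 'rV[int]_d})
  (u : 'rV[int]_d -> R) : R := \sum_(k <- Theta) `|u k|.

Definition diamTheta (d : nat) (Theta : {fset 'rV[int]_d}) : nat :=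
  \max_(i <- Theta) \max_(j <- Theta) `|l1 (i - j)|%N.

Definition cconst (R : realType) (d : nat) (Theta : {fset 'rV[int]_d})
  (u : 'rV[int]_d -> R) : R :=
  (diamTheta Theta)%:R^-1 * ln (1 + ubar Theta u / (2 * unorm Theta u)).

Definition alpha (R : realType) (d : nat) (c : R) (x y k : 'rV[int]_d) : R :=
  2^-1 * (expR (- c * (l1 (k - x))%:~R) + expR (- c * (l1 (k - y))%:~R)).

(* W(k) = sum_{j in Z^d} alpha(j) u(k - j).  Since u vanishes outside Theta,
   the summand vanishes unless j = k - t with t in Theta; the series is thus
   the finite sum over the (finite) set {k - t | t in Theta} of indices j. *)
Definition W (R : realType) (d : nat) (Theta : {fset 'rV[int]_d})
  (u : 'rV[int]_d -> R) (x y k : 'rV[int]_d) : R :=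
  \sum_(j <- [fset (k - t) | t in Theta])
     alpha (cconst Theta u) x y j * u (k - j).

(* Main.v *)
Require Import Defs.
From HB Require Import structures.
From mathcomp Require Import all_boot all_order all_algebra.
From mathcomp Require Import finmap.
From mathcomp Require Import all_classical all_reals all_analysis.
From mathcomp Require Import ring lra zify.
Import Order.TTheory GRing.Theory Num.Theory.
Local Open Scope ring_scope.

Lemma l1_ge0 d (v : 'rV[int]_d) : 0 <= l1 v.
Proof. by rewrite /l1; apply: sumr_ge0 => i _. Qed.

Lemma l1_triangle d (a b : 'rV[int]_d) : l1 (a + b) <= l1 a + l1 b.
Proof.
rewrite /l1 -big_split /=; apply: ler_sum => i _.
by rewrite mxE ler_normD.
Qed.

Lemma l1_N d (a : 'rV[int]_d) : l1 (- a) = l1 a.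
Proof. by rewrite /l1; apply: eq_bigr => i _; rewrite mxE normrN. Qed.

Lemma expR_dev (R : realType) (z m : R) : `|z| <= m -> `|expR z - 1| <= expR m - 1.
Proof.
move=> hz.
have hm : 1 + m <= expR m := expR_ge1Dx m.
have [z0|z0] := leP 0 z.
- have h1 : 1 <= expR z by rewrite -expR0 ler_expR.
  rewrite ger0_norm ?subr_ge0 //.
  rewrite lerD2r ler_expR. by rewrite ger0_norm in hz.
- have h1 : expR z <= 1 by rewrite -expR0 ler_expR ltW.
  have h2 := expR_ge1Dx z.
  rewrite ler0_norm ?subr_le0 //.
  rewrite ltr0_norm // in hz. lra.
Qed.

Lemma key (R : realType) d (Theta : {fset 'rV[int]_d}) (u : 'rV[int]_d -> R)
  (c M : R) (N : nat) (z k : 'rV[int]_d) :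
  0 <= c -> 0 <= M -> expR (c * N%:R) <= 1 + M ->
  (forall t, t \in Theta -> (l1 t)%:~R <= N%:R :> R) ->
  expR (- c * (l1 (k - z))%:~R) * (ubar Theta u - M * unorm Theta u)
  <= \sum_(t <- Theta) expR (- c * (l1 (k - t - z))%:~R) * u t.
Proof.
move=> c0 M0 cN tN.
set F := expR (- c * (l1 (k - z))%:~R).
rewrite /ubar /unorm mulr_sumr -sumrB mulr_sumr; rewrite big_seq [X in _ <= X]big_seq; apply: ler_sum => t ht.
set a := l1 (k - t - z); set b := l1 (k - z).
have ab : `|a - b| <= l1 t.
  have h1 : a <= b + l1 t.
    rewrite /a /b (_ : (k - t - z = (k - z) + - t)%R); last by rewrite addrAC.
    by rewrite -(@l1_N _ t); apply: l1_triangle.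
  have h2 : b <= a + l1 t.
    rewrite /b /a (_ : (k - z = (k - t - z) + t)%R); last by rewrite addrAC subrK.
    by apply: l1_triangle.
  rewrite ler_norml; apply/andP; split; lia.
have e : expR (- c * a%:~R) = F * expR (- c * (a - b)%:~R).
  by rewrite /F -expRD intrB; congr expR; ring.
set E := expR (- c * (a - b)%:~R).
have hE : `|E - 1| <= M.
  apply: le_trans (_ : expR (c * N%:R) - 1 <= M); last by lra.
  apply: expR_dev; rewrite normrM normrN (ger0_norm c0).
  apply: ler_wpM2l => //; apply: le_trans (tN t ht).
  by rewrite -intr_norm ler_int.
have Fp : 0 <= F by apply: ltW; apply: expR_gt0.
rewrite e -mulrA; apply: ler_wpM2l => //.
have : - (M * `|u t|) <= (E - 1) * u t.
  rewrite lerNl; apply: le_trans (ler_norm _) _.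
  by rewrite normrN normrM ler_wpM2r.
rewrite mulrBl mul1r -/E; lra.
Qed.

Local Open Scope fset_scope.

Theorem lemmaA4 (R : realType) (d : nat) (Theta : {fset 'rV[int]_d})
  (u : 'rV[int]_d -> R)
  (hd : (1 <= d)%N)
  (hsupp : forall k, u k != 0 <-> k \in Theta)
  (h0 : 0 \in Theta)
  (htwo : (2 <= #|` Theta|)%N)
  (hpos : 0 < ubar Theta u) :
  forall x y : 'rV[int]_d,
    (forall k, alpha (cconst Theta u) x y k * (ubar Theta u / 2) <= W Theta u x y k
               /\ 0 < alpha (cconst Theta u) x y k * (ubar Theta u / 2))
    /\ ubar Theta u / 4 <= W Theta u x y x
    /\ ubar Theta u / 4 <= W Theta u x y y.
Proof.
move=> x y.
set U := ubar Theta u. set V := unorm Theta u. set c := cconst Theta u.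
set N := diamTheta Theta.
have UV : U <= V.
  rewrite /U /V /ubar /unorm. apply: le_trans (ler_norm_sum _ _ _).
  exact: ler_norm.
have Vpos : 0 < V by apply: lt_le_trans UV.
set M := U / (2 * V).
have Mpos : 0 < M by rewrite /M divr_gt0 // mulr_gt0.
have c0 : 0 <= c.
  rewrite /c /cconst mulr_ge0 // ?invr_ge0 // ln_ge0 // lerDl; exact: ltW Mpos.
have cN : (expR (c * N%:R) <= 1 + M)%R.
  have [N0|Npos] := eqVneq N 0%N.
    rewrite N0 mulr0 expR0; lra.
  rewrite /c /cconst -/N -/U -/V -/M mulrAC mulVf ?pnatr_eq0 // mul1r lnK //.
  rewrite posrE; lra.
have tN : forall t, t \in Theta -> (l1 t)%:~R <= N%:R :> R.
  move=> t ht.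
  have : (`|l1 (t - 0)|%N <= N)%N.
    rewrite /N /diamTheta. apply: (bigmaxn_sup_seq t) => //.
    exact: (bigmaxn_sup_seq 0).
  rewrite subr0 -(ler_nat R) => h; apply: le_trans h.
  by rewrite natr_absz ger0_norm ?l1_ge0.
have MV : M * V = U / 2.
  by rewrite /M; field; rewrite gt_eqF.
have Wk : forall k, W Theta u x y k = 2^-1 *
   (\sum_(t <- Theta) expR (- c * (l1 (k - t - x))%:~R) * u t +
    \sum_(t <- Theta) expR (- c * (l1 (k - t - y))%:~R) * u t).
  move=> k; rewrite /W big_imfset /=; last first.
    by move=> ? ? _ _ /addrI /oppr_inj.
  rewrite -big_split mulr_sumr; apply: eq_bigr => t _.
  have -> : (k - (k - t) = t)%R by rewrite opprB addrCA subrr addr0.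
  by rewrite /alpha -/c -mulrA mulrDl.
have Kk : forall z k, expR (- c * (l1 (k - z))%:~R) * (U / 2) <=
    \sum_(t <- Theta) expR (- c * (l1 (k - t - z))%:~R) * u t.
  move=> z k; have -> : U / 2 = U - M * V by rewrite MV; field.
  have := @key R d Theta u c M N z k c0 (ltW Mpos) cN tN.
  by [].

have Apos : forall k, 0 < alpha c x y k.
  move=> k; apply: mulr_gt0; first by rewrite invr_gt0 ltr0n.
  by rewrite addr_gt0 // expR_gt0.
have main : forall k, alpha c x y k * (U / 2) <= W Theta u x y k.
  move=> k; rewrite Wk /alpha -mulrA ler_wpM2l ?invr_ge0 ?ler0n //.
  by rewrite mulrDl lerD.
have l10 : l1 (0 : 'rV[int]_d) = 0.
  by rewrite /l1 big1 // => i _; rewrite mxE.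
split.
  move=> k; split; first exact: main.
  by rewrite mulr_gt0 // divr_gt0.
have U0 : 0 < U by [].
split.
- apply: le_trans (main x); rewrite /alpha subrr l10 mulr0 expR0.
  have := expR_gt0 (- c * (l1 (x - y))%:~R).
  set e := expR _ => he; nra.
- apply: le_trans (main y); rewrite /alpha subrr l10 mulr0 expR0.
  have := expR_gt0 (- c * (l1 (y - x))%:~R).
  set e := expR _ => he; nra.
Qed.
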